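(* Let $v\in C(S^1,(0,\infty))$ be separable in $S^1$ with $\max_{S^1}v>\min_{S^1}v$. Let $\alpha_0\in[0,2\pi)$ be such that the set of maximum points of $v$ equals $\{(\cos(\alpha_0+\theta),\sin(\alpha_0+\theta)):|\theta|\le\theta_1\}$ for some $\theta_1\in[0,\pi)$ (such $\alpha_0$ exists, and is the angle of the center of the arc of maximum points). Then for every $\alpha\in\mathbb{R}$: if $(\cos\alpha_0,\sin\alpha_0)\in S^1_\alpha$, then $v(x)\ge v(l_\alpha(x))$ for all $x\in S^1_\alpha$; and if $(\cos\alpha_0,\sin\alpha_0)\in S^1\setminus S^1_\alpha$, then $v(x)\le v(l_\alpha(x))$ for all $x\in S^1_\alpha$.
   Context: $S^1\subset\mathbb{R}^2$ is the unit circle. For $\alpha\in\mathbb{R}$, $S^1_\alpha=\{(\cos(\alpha+\theta),\sin(\alpha+\theta)):\theta\in(0,\pi)\}$, and for $x\in S^1$, $l_\alpha(x)$ denotes the reflection of $x$ across the line through the origin with direction $(\cos\alpha,\sin\alpha)$. A function $v\in C(S^1,\mathbb{R})$ is called separable in $S^1$ if for every $\alpha\in[0,2\pi)$, either $v(l_\alpha(x))\ge v(x)$ for all $x\in S^1_\alpha$, or $v(l_\alpha(x))\le v(x)$ for all $x\in S^1_\alpha$. *)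

(* Defs.v *)
From Stdlib Require Import Reals.
Open Scope R_scope.

Definition pt : Type := (R * R)%type.

Definition S1 (p : pt) : Prop := fst p ^ 2 + snd p ^ 2 = 1.

Definition ang (t : R) : pt := (cos t, sin t).

Definition S1_half (alpha : R) (p : pt) : Prop :=
  exists theta, 0 < theta < PI /\ p = ang (alpha + theta).

(* Reflection across the line through 0 with direction u = (cos alpha, sin alpha):
   l_alpha(x) = 2 <x,u> u - x. *)
Definition refl (alpha : R) (p : pt) : pt :=
  let d := fst p * cos alpha + snd p * sin alpha in
  (2 * d * cos alpha - fst p, 2 * d * sin alpha - snd p).

Definition dist2 (p q : pt) : R :=
  sqrt ((fst p - fst q) ^ 2 + (snd p - snd q) ^ 2).

Definition continuous_on_S1 (v : pt -> R) : Prop :=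
  forall p, S1 p -> forall eps, 0 < eps ->
    exists delta, 0 < delta /\
      forall q, S1 q -> dist2 q p < delta -> Rabs (v q - v p) < eps.

Definition separable_S1 (v : pt -> R) : Prop :=
  forall alpha, 0 <= alpha < 2 * PI ->
    (forall x, S1_half alpha x -> v (refl alpha x) >= v x) \/
    (forall x, S1_half alpha x -> v (refl alpha x) <= v x).

Definition is_max_point (v : pt -> R) (p : pt) : Prop :=
  S1 p /\ forall q, S1 q -> v q <= v p.

(* Main.v *)
Require Import Defs.
From Stdlib Require Import Reals Lra Lia Nsatz ZArith.
Open Scope R_scope.

Lemma ang_eq a b : ang a = ang b -> cos a = cos b /\ sin a = sin b.
Proof. unfold ang; intros H; inversion H; auto. Qed.

Lemma ang_shift a b s : ang a = ang b -> ang (a + s) = ang (b + s).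
Proof. intros H; apply ang_eq in H; destruct H as [H1 H2]; unfold ang;
  rewrite !cos_plus, !sin_plus, H1, H2; reflexivity. Qed.

Lemma refl_ang al t : refl al (ang (al + t)) = ang (al - t).
Proof.
  unfold refl, ang; simpl. rewrite cos_plus, sin_plus, cos_minus, sin_minus.
  pose proof (sin2_cos2 al) as H. unfold Rsqr in H.
  f_equal; nsatz.
Qed.

Lemma S1_ang a : S1 (ang a).
Proof. unfold S1, ang; simpl. pose proof (sin2_cos2 a). unfold Rsqr in *. lra. Qed.

Lemma ang_2PI a : ang (a + 2 * PI) = ang a.
Proof. unfold ang; rewrite cos_plus, sin_plus, cos_2PI, sin_2PI; f_equal; ring. Qed.

Lemma cos_lt1 u : 0 < u < 2 * PI -> cos u < 1.
Proof.
  intros Hu. replace u with (2 * (u/2)) by field. rewrite cos_2a_sin.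
  assert (0 < sin (u/2)) by (apply sin_gt_0; lra). nra.
Qed.

Lemma ang_neq a u : 0 < u < 2 * PI -> ang a <> ang (a + u).
Proof.
  intros Hu H. apply ang_eq in H. destruct H as [H1 H2].
  assert (cos u = 1).
  { replace u with ((a + u) - a) by ring. rewrite cos_minus, <- H1, <- H2.
    pose proof (sin2_cos2 a). unfold Rsqr in *. lra. }
  pose proof (cos_lt1 u Hu). lra.
Qed.

Lemma sin_pos_bound y : 0 < y -> - y < sin y < y.
Proof.
  intros Hy. split; [|apply sin_lt_x; lra].
  destruct (Rlt_dec y PI).
  - pose proof (sin_gt_0 y Hy r). lra.
  - pose proof (SIN_bound y). pose proof PI2_3_2. lra.
Qed.

Lemma abs_sin_le x : Rabs (sin x) <= Rabs x.
Proof.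
  apply Rabs_le. destruct (Rtotal_order x 0) as [H|[H|H]].
  - pose proof (sin_pos_bound (-x) ltac:(lra)). rewrite sin_neg in H0.
    rewrite Rabs_left by lra. lra.
  - subst; rewrite sin_0, Rabs_R0; lra.
  - pose proof (sin_pos_bound x H). rewrite Rabs_right by lra. lra.
Qed.

Lemma dist_ang a b : dist2 (ang a) (ang b) <= Rabs (a - b).
Proof.
  unfold dist2, ang; cbn [fst snd].
  assert (E : (cos a - cos b) ^ 2 + (sin a - sin b) ^ 2 = 4 * (sin ((a - b)/2))^2).
  { assert (cos (a - b) = 1 - 2 * sin ((a-b)/2) * sin ((a-b)/2)).
    { rewrite <- cos_2a_sin. f_equal; field. }
    rewrite cos_minus in H. pose proof (sin2_cos2 a). pose proof (sin2_cos2 b).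
    unfold Rsqr in *. nra. }
  rewrite E. rewrite <- (sqrt_Rsqr_abs (a - b)).
  apply sqrt_le_1_alt. pose proof (Rsqr_le_abs_1 _ _ (abs_sin_le ((a-b)/2))).
  unfold Rsqr in *. nra.
Qed.

Lemma ang_period_nat x n : ang (x + 2 * INR n * PI) = ang x.
Proof.
  induction n.
  - simpl. f_equal; ring.
  - rewrite S_INR. replace (x + 2 * (INR n + 1) * PI) with ((x + 2 * INR n * PI) + 2 * PI) by ring.
    rewrite ang_2PI. exact IHn.
Qed.

Lemma ang_period x k : ang (x + 2 * IZR k * PI) = ang x.
Proof.
  destruct (Z_le_gt_dec 0 k) as [H|H].
  - rewrite <- (Z2Nat.id k H), <- INR_IZR_INZ. apply ang_period_nat.
  - assert (H' : (0 <= - k)%Z) by lia.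
    pose proof (ang_period_nat (x + 2 * IZR k * PI) (Z.to_nat (- k))) as E.
    rewrite INR_IZR_INZ, Z2Nat.id, opp_IZR in E by exact H'.
    replace (x + 2 * IZR k * PI + 2 * - IZR k * PI) with x in E by ring.
    symmetry; exact E.
Qed.

Lemma reduce a : exists a', 0 <= a' < 2 * PI /\ ang a' = ang a.
Proof.
  pose proof PI_RGT_0.
  set (k := Zfloor (a / (2 * PI))).
  pose proof (Zfloor_bound (a / (2 * PI))) as [B1 B2]. fold k in B1, B2.
  exists (a + 2 * IZR (- k) * PI). split.
  - rewrite opp_IZR.
    apply Rmult_le_compat_r with (r := 2 * PI) in B1; [|lra].
    apply Rmult_lt_compat_r with (r := 2 * PI) in B2; [|lra].
    unfold Rdiv in B1, B2. rewrite Rmult_assoc, Rinv_l in B1, B2 by lra. lra.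
  - apply ang_period.
Qed.

Lemma refl_congr al be p : ang al = ang be -> refl al p = refl be p.
Proof. intros H; apply ang_eq in H; destruct H as [H1 H2]. unfold refl; rewrite H1, H2; reflexivity. Qed.

Lemma half_congr al be p : ang al = ang be -> S1_half al p -> S1_half be p.
Proof.
  intros H [th [Hth Hp]]. exists th; split; auto. rewrite Hp. apply ang_shift; auto.
Qed.

Lemma sep_any v : separable_S1 v -> forall al,
    (forall x, S1_half al x -> v (refl al x) >= v x) \/
    (forall x, S1_half al x -> v (refl al x) <= v x).
Proof.
  intros Hs al. destruct (reduce al) as [a' [Ha' E]].
  destruct (Hs a' Ha') as [H|H]; [left|right]; intros x Hx;
    rewrite <- (refl_congr _ _ x E); apply H; apply (half_congr al a'); auto.
Qed.

Lemma abs_le_iff s t : Rabs s <= t <-> - t <= s <= t.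
Proof. unfold Rabs; destruct (Rcase_abs s); split; intros; lra. Qed.

Lemma P1 v alpha0 theta1 al th :
  separable_S1 v ->
  0 <= theta1 < PI ->
  (forall p, is_max_point v p <->
     exists theta, Rabs theta <= theta1 /\ p = ang (alpha0 + theta)) ->
  0 < th < PI -> ang alpha0 = ang (al + th) ->
  forall x, S1_half al x -> v (refl al x) <= v x.
Proof.
  intros Hs Hth1 Hmax Hth E.
  assert (Key : forall t, 0 < t < PI -> - theta1 <= t - th <= theta1 ->
     0 < t + th - theta1 -> t + th + theta1 < 2 * PI ->
     forall x, S1_half al x -> v (refl al x) <= v x).
  { intros t Ht Ht1 Ht2 Ht3.
    assert (Mx : is_max_point v (ang (al + t))).
    { apply Hmax. exists (t - th). split; [apply abs_le_iff; lra|].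
      rewrite (ang_shift _ _ (t - th) E). f_equal; ring. }
    assert (NM : ~ is_max_point v (ang (al - t))).
    { intros M. apply Hmax in M. destruct M as [s [Hs1 Hs2]].
      apply abs_le_iff in Hs1.
      rewrite (ang_shift _ _ s E) in Hs2.
      apply (ang_neq (al - t) (t + th + s)); [lra|].
      rewrite Hs2. f_equal; ring. }
    assert (Lt : v (ang (al - t)) < v (ang (al + t))).
    { destruct (Rlt_le_dec (v (ang (al - t))) (v (ang (al + t)))) as [h|h]; auto.
      exfalso. apply NM. split; [apply S1_ang|]. intros q Hq.
      destruct Mx as [_ Mx]. specialize (Mx q Hq). lra. }
    destruct (sep_any v Hs al) as [H|H]; auto.
    exfalso. assert (S1_half al (ang (al + t))) by (exists t; split; auto).
    specialize (H _ H0). rewrite refl_ang in H. lra. }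
  destruct (Rlt_le_dec (th + theta1) PI).
  - apply (Key (th + theta1)); lra.
  - apply (Key ((Rabs (th - theta1) + (2 * PI - th - theta1)) / 2));
    unfold Rabs; destruct (Rcase_abs (th - theta1)); lra.
Qed.

Lemma P2s v alpha0 theta1 al th :
  separable_S1 v ->
  0 <= theta1 < PI ->
  (forall p, is_max_point v p <->
     exists theta, Rabs theta <= theta1 /\ p = ang (alpha0 + theta)) ->
  PI < th < 2 * PI -> ang alpha0 = ang (al + th) ->
  forall t, 0 < t < PI -> v (ang (al + t)) <= v (ang (al - t)).
Proof.
  intros Hs Hth1 Hmax Hth E t Ht.
  assert (E' : ang alpha0 = ang ((al + PI) + (th - PI))) by (rewrite E; f_equal; ring).
  assert (Hh : S1_half (al + PI) (ang ((al + PI) + (PI - t)))) by (exists (PI - t); split; auto; lra).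
  pose proof (P1 v alpha0 theta1 (al + PI) (th - PI) Hs Hth1 Hmax ltac:(lra) E' _ Hh) as HH.
  rewrite refl_ang in HH.
  replace (al + PI - (PI - t)) with (al + t) in HH by ring.
  replace (al + PI + (PI - t)) with ((al - t) + 2 * PI) in HH by ring.
  rewrite ang_2PI in HH. exact HH.
Qed.

Lemma limit v a b c e0 :
  continuous_on_S1 v -> 0 < e0 -> Rabs c <= 2 ->
  (forall e, 0 < e < e0 -> a <= v (ang (b + c * e))) -> a <= v (ang b).
Proof.
  intros Hc He0 Hcb H.
  destruct (Rle_lt_dec a (v (ang b))) as [h|h]; auto. exfalso.
  destruct (Hc (ang b) (S1_ang b) (a - v (ang b)) ltac:(lra)) as [d [Hd Hd2]].
  set (e := Rmin (e0 / 2) (d / 4)).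
  assert (0 < e) by (apply Rmin_pos; lra).
  assert (e <= e0 / 2) by apply Rmin_l.
  assert (e <= d / 4) by apply Rmin_r.
  specialize (H e ltac:(lra)).
  assert (Dd : dist2 (ang (b + c * e)) (ang b) < d).
  { eapply Rle_lt_trans; [apply dist_ang|].
    replace (b + c * e - b) with (c * e) by ring. rewrite Rabs_mult, (Rabs_right e) by lra.
    pose proof (Rabs_pos c). nra. }
  specialize (Hd2 _ (S1_ang _) Dd). apply Rabs_def2 in Hd2. lra.
Qed.

Theorem corollary2p1 (v : pt -> R) (alpha0 theta1 : R) :
  continuous_on_S1 v ->
  (forall p, S1 p -> 0 < v p) ->
  separable_S1 v ->
  (* max_{S^1} v > min_{S^1} v *)
  (exists p q, S1 p /\ S1 q /\ v p < v q) ->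
  0 <= alpha0 < 2 * PI ->
  0 <= theta1 < PI ->
  (forall p, is_max_point v p <->
     exists theta, Rabs theta <= theta1 /\ p = ang (alpha0 + theta)) ->
  forall alpha : R,
    (S1_half alpha (ang alpha0) ->
       forall x, S1_half alpha x -> v x >= v (refl alpha x)) /\
    (S1 (ang alpha0) /\ ~ S1_half alpha (ang alpha0) ->
       forall x, S1_half alpha x -> v x <= v (refl alpha x)).
Proof.
  intros Hc Hpos Hs Hne Ha0 Hth1 Hmax al. split.
  - intros [th [Hth E]] x Hx.
    pose proof (P1 v alpha0 theta1 al th Hs Hth1 Hmax Hth E x Hx). lra.
  - intros [_ HN] x [t [Ht ->]]. rewrite refl_ang.
    destruct (reduce (alpha0 - al)) as [th [Hth E0]].
    assert (E : ang alpha0 = ang (al + th)).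
    { pose proof (ang_shift _ _ al E0) as E1.
      replace (alpha0 - al + al) with alpha0 in E1 by ring.
      rewrite <- E1. f_equal; ring. }
    destruct (Rtotal_order th 0) as [h|[h|h]]; [lra| |].
    +
      subst th.
      apply (limit v _ (al - t) 2 (Rmin t (PI - t)) Hc); [apply Rmin_pos; lra|
        rewrite Rabs_right; lra|].
      intros e He. pose proof (Rmin_l t (PI - t)). pose proof (Rmin_r t (PI - t)).
      assert (E' : ang alpha0 = ang ((al + e) + (2 * PI - e))).
      { rewrite E. replace (al + e + (2 * PI - e)) with ((al + 0) + 2 * PI) by ring.
        rewrite ang_2PI. reflexivity. }
      pose proof (P2s v alpha0 theta1 (al + e) (2 * PI - e) Hs Hth1 Hmax ltac:(lra) E' (t - e) ltac:(lra)) as HH.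
      replace (al + e + (t - e)) with (al + t) in HH by ring.
      replace (al + e - (t - e)) with (al - t + 2 * e) in HH by ring. exact HH.
    + destruct (Rtotal_order th PI) as [h2|[h2|h2]].
      * exfalso. apply HN. exists th. split; auto.
      * subst th.
        apply (limit v _ (al - t) (-2) (Rmin t (PI - t)) Hc); [apply Rmin_pos; lra|
          rewrite Rabs_left; lra|].
        intros e He. pose proof (Rmin_l t (PI - t)). pose proof (Rmin_r t (PI - t)).
        assert (E' : ang alpha0 = ang ((al - e) + (PI + e))).
        { rewrite E. f_equal; ring. }
        pose proof (P2s v alpha0 theta1 (al - e) (PI + e) Hs Hth1 Hmax ltac:(lra) E' (t + e) ltac:(lra)) as HH.
        replace (al - e + (t + e)) with (al + t) in HH by ring.
        replace (al - e - (t + e)) with (al - t + -2 * e) in HH by ring. exact HH.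
      * apply (P2s v alpha0 theta1 al th Hs Hth1 Hmax ltac:(lra) E t Ht).
Qed.
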